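(* Let $\theta$ be a comtrace alphabet. For all $T_1,T_2\in\mathsf{LCT}(\theta)$, the composition $T_1\odot T_2$ is an lsos-comtrace over $\theta$, i.e. $T_1\odot T_2\in\mathsf{LCT}(\theta)$.
   Context: So-structures: $(X,\prec,\sqsubset)$ with (S1) $\neg(\alpha\sqsubset\alpha)$; (S2) $\alpha\prec\beta\Rightarrow\alpha\sqsubset\beta$; (S3) $\alpha\sqsubset\beta\sqsubset\gamma\wedge\alpha\neq\gamma\Rightarrow\alpha\sqsubset\gamma$; (S4) $(\alpha\sqsubset\beta\prec\gamma)\vee(\alpha\prec\beta\sqsubset\gamma)\Rightarrow\alpha\prec\gamma$. Quotient: $\alpha\equiv_\sqsubset\beta$ iff $\alpha=\beta$ or ($\alpha\sqsubset\beta\wedge\beta\sqsubset\alpha$); classes $[\alpha]$; $[\alpha]\hat\prec[\beta]$ iff $[\alpha]\neq[\beta]$ and $([\alpha]\times[\beta])\cap\prec\neq\emptyset$; $\hat\sqsubset$ likewise. $R^{\mathrm{cov}}:=\{(x,y):xRy\wedge\neg\exists z(xRz\wedge zRy)\}$. $\lozenge$-closure: $(X,R_1,R_2)^\lozenge:=(X,(R_1\cup R_2)^*\circ R_1\circ(R_1\cup R_2)^*,(R_1\cup R_2)^*\setminus\mathrm{id}_X)$. Labeled structures are taken up to label-preserving isomorphism (bijections preserving/reflecting both relations and preserving labels); $[\cdot]$ denotes the class. Comtrace alphabet: $\theta=(E,sim,ser)$, $E$ finite, $ser\subseteq sim\subseteq E\times E$, $sim$ irreflexive symmetric. Lsos-comtrace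 over $\theta$: the class of a finite labeled so-structure $(X,\prec,\sqsubset,\lambda)$, $\lambda:X\to E$, such that for all $\alpha\neq\beta$: (LC1) $[\alpha]((\hat\sqsubset)^{\mathrm{cov}}\cap\hat\prec)[\beta]\Rightarrow\lambda[[\alpha]]\times\lambda[[\beta]]\not\subseteq ser$; (LC2) $[\alpha]((\hat\sqsubset)^{\mathrm{cov}}\setminus\hat\prec)[\beta]\Rightarrow\lambda[[\beta]]\times\lambda[[\alpha]]\not\subseteq ser$; (LC3) for nonempty $A,B\subseteq[\alpha]$ with $A\cup B=[\alpha]$, $\lambda[A]\times\lambda[B]\not\subseteq ser$; (LC4) $(\lambda\alpha,\lambda\beta)\notin ser\Rightarrow\alpha\prec\beta\vee\beta\sqsubset\alpha$; (LC5) $(\lambda\alpha,\lambda\beta)\notin sim\Rightarrow\alpha\prec\beta\vee\beta\prec\alpha$. $\mathsf{LCT}(\theta)$ is the set of these. Composition: for $T_i=[X_i,\prec_i,\sqsubset_i,\lambda_i]$ ($i=1,2$), with $X_1,X_2$ made disjoint, $T_1\odot T_2:=[X,\prec,\sqsubset,\lambda]$ where $X=X_1\uplus X_2$, $\lambda=\lambda_1\uplus\lambda_2$, $(X,\prec,\sqsubset)=(X,\prec_{\langle1,2\rangle},\sqsubset_{\langle1,2\rangle})^\lozenge$ with $\prec_{\langle1,2\rangle}=\prec_1\cup\prec_2\cup\{(\alpha,\beta)\in X_1\times X_2:(\lambda\alpha,\lambda\beta)\notin ser\}$ and $\sqsubset_{\langle1,2\rangle}=\sqsubset_1\cup\sqsubset_2\cup\{(\alpha,\beta)\in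 X_1\times X_2:(\lambda\beta,\lambda\alpha)\notin ser\}$. *)

(* Defs.v *)
From mathcomp Require Import all_boot.
Set Implicit Arguments. Unset Strict Implicit. Unset Printing Implicit Defensive.

Definition comtrace_alphabet (E : finType) (sim ser : rel E) : Prop :=
  [/\ (forall a b, ser a b -> sim a b), irreflexive sim & symmetric sim].

Definition so_structure (X : finType) (prec sq : rel X) : Prop :=
  [/\ (forall a, ~~ sq a a),
      (forall a b, prec a b -> sq a b),
      (forall a b c, sq a b -> sq b c -> a != c -> sq a c) &
      (forall a b c, (sq a b && prec b c) || (prec a b && sq b c) -> prec a c)].

Section Quotient.
Variables (X : finType) (prec sq : rel X).

Definition sq_eqv (a b : X) : bool := (a == b) || (sq a b && sq b a).

Definition cls (a : X) : {set X} := [set b | sq_eqv a b].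

Definition hprec (a b : X) : bool :=
  (cls a != cls b) && [exists x in cls a, exists y in cls b, prec x y].
Definition hsq (a b : X) : bool :=
  (cls a != cls b) && [exists x in cls a, exists y in cls b, sq x y].

(** [a] (^⊏)^cov [b]: every class is of the form [c] *)
Definition hsq_cov (a b : X) : bool :=
  hsq a b && ~~ [exists c, hsq a c && hsq c b].
End Quotient.

Definition lsos_comtrace (E : finType) (sim ser : rel E)
    (X : finType) (prec sq : rel X) (lam : X -> E) : Prop :=
  so_structure prec sq /\
  forall a b : X, a != b ->
    [/\
        (hsq_cov sq a b && hprec prec sq a b ->
           exists2 x, x \in cls sq a & exists2 y, y \in cls sq b & ~~ ser (lam x) (lam y)),
        (hsq_cov sq a b && ~~ hprec prec sq a b ->
           exists2 x, x \in cls sq a & exists2 y, y \in cls sq b & ~~ ser (lam y) (lam x)),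
        (forall A B : {set X}, A != set0 -> B != set0 -> A \subset cls sq a ->
           B \subset cls sq a -> A :|: B = cls sq a ->
           exists2 x, x \in A & exists2 y, y \in B & ~~ ser (lam x) (lam y)),
        (~~ ser (lam a) (lam b) -> prec a b \/ sq b a) &
        (~~ sim (lam a) (lam b) -> prec a b \/ prec b a)].

Section Composition.
Variables (E : finType) (ser : rel E).
Variables (X1 X2 : finType) (prec1 sq1 : rel X1) (prec2 sq2 : rel X2)
          (lam1 : X1 -> E) (lam2 : X2 -> E).

Definition comp_lab (x : X1 + X2) : E :=
  match x with inl a => lam1 a | inr b => lam2 b end.

Definition prec12 : rel (X1 + X2) := fun x y =>
  match x, y with
  | inl a, inl b => prec1 a b
  | inr a, inr b => prec2 a b
  | inl a, inr b => ~~ ser (lam1 a) (lam2 b)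
  | inr _, inl _ => false
  end.

Definition sq12 : rel (X1 + X2) := fun x y =>
  match x, y with
  | inl a, inl b => sq1 a b
  | inr a, inr b => sq2 a b
  | inl a, inr b => ~~ ser (lam2 b) (lam1 a)
  | inr _, inl _ => false
  end.

Definition star12 : rel (X1 + X2) :=
  connect [rel x y | prec12 x y || sq12 x y].

Definition comp_prec : rel (X1 + X2) := fun x y =>
  [exists z, exists w, [&& star12 x z, prec12 z w & star12 w y]].
Definition comp_sq : rel (X1 + X2) := fun x y =>
  star12 x y && (x != y).
End Composition.

(* Main.v *)
Require Import Defs.
From mathcomp Require Import all_boot.
Set Implicit Arguments. Unset Strict Implicit. Unset Printing Implicit Defensive.

Section SO.
Variables (X : finType) (prec sq : rel X).
Hypothesis Hso : so_structure prec sq.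

Lemma sqeqv_sym a b : sq_eqv sq a b = sq_eqv sq b a.
Proof. by rewrite /sq_eqv eq_sym andbC. Qed.

Lemma sqeqv_trans a b c : sq_eqv sq a b -> sq_eqv sq b c -> sq_eqv sq a c.
Proof.
case: Hso => S1 S2 S3 S4.
rewrite /sq_eqv; case: eqP => [-> //|nab] /= /andP [ab ba].
case: eqP => [<- |nbc] /=; first by rewrite ab ba orbT.
case/andP => bc cb.
case: eqP => [//|nac] /=.
by rewrite (S3 _ _ _ ab bc) ?(S3 _ _ _ cb ba) //; apply/eqP => // h; apply: nac.
Qed.

Lemma cls_refl a : a \in cls sq a.
Proof. by rewrite inE /sq_eqv eqxx. Qed.

Lemma cls_sym a b : (a \in cls sq b) = (b \in cls sq a).
Proof. by rewrite !inE sqeqv_sym. Qed.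

Lemma cls_eqE a b : (cls sq a == cls sq b) = (b \in cls sq a).
Proof.
apply/idP/idP => [/eqP ->|h]; first exact: cls_refl.
rewrite inE in h.
apply/eqP/setP => z; rewrite !inE; apply/idP/idP => hz.
  by apply: sqeqv_trans hz; rewrite sqeqv_sym.
exact: sqeqv_trans hz.
Qed.

Lemma prec_not_same u v c : prec u v -> u \in cls sq c -> v \in cls sq c -> False.
Proof.
case: Hso => S1 S2 S3 S4 puv.
rewrite !inE => hu hv.
have : sq_eqv sq u v by apply: sqeqv_trans hv; rewrite sqeqv_sym.
rewrite /sq_eqv; case: eqP => [euv|_] /=.
  by subst v; move: (S1 u); rewrite (S2 _ _ puv).
case/andP => _ vu.
have : prec u u by apply: (S4 u v u); rewrite puv vu orbT.
by move/S2; rewrite (negbTE (S1 u)).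
Qed.

Lemma hsq_intro a b u v : u \in cls sq a -> v \in cls sq b -> sq u v ->
  b \notin cls sq a -> hsq sq a b.
Proof.
move=> hu hv huv hb; rewrite /hsq cls_eqE hb /=.
apply/existsP; exists u; rewrite hu /=; apply/existsP; exists v; by rewrite hv.
Qed.

Lemma mid al be u v m : hsq_cov sq al be -> u \in cls sq al -> v \in cls sq be ->
  (u == m) || sq u m -> (m == v) || sq m v -> (m \in cls sq al) || (m \in cls sq be).
Proof.
move=> /andP [_ /existsPn H] hu hv h1 h2.
case: (boolP (m \in cls sq al)) => // hA; case: (boolP (m \in cls sq be)) => // hB.
exfalso.
case/orP: h1 => [/eqP um|um]; first by rewrite -um hu in hA.
case/orP: h2 => [/eqP mv|mv]; first by rewrite mv hv in hB.
move: (H m); rewrite (@hsq_intro al m u m) //; last exact: cls_refl.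
rewrite (@hsq_intro m be m v) //; first exact: cls_refl.
by rewrite cls_sym.
Qed.
End SO.

Section Embed.
Variables (E : finType) (sim ser : rel E).
Hypothesis Halph : comtrace_alphabet sim ser.
Variables (Y X : finType) (pY sY : rel Y) (pX sX : rel X) (f : Y -> X)
  (lamY : Y -> E) (lamX : X -> E).
Hypotheses (HsoY : so_structure pY sY) (HsoX : so_structure pX sX)
  (finj : injective f) (HS : forall a b, sX (f a) (f b) = sY a b)
  (HP : forall a b, pX (f a) (f b) = pY a b)
  (Hcl : forall a x, x \in cls sX (f a) -> exists y, x = f y)
  (Hlam : forall y, lamX (f y) = lamY y).

Lemma mem_cls_f a b : (f b \in cls sX (f a)) = (b \in cls sY a).
Proof. by rewrite !inE /sq_eqv inj_eq // !HS. Qed.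

Lemma cls_f_eq a b : (cls sX (f a) == cls sX (f b)) = (cls sY a == cls sY b).
Proof. by rewrite (cls_eqE HsoX) (cls_eqE HsoY) mem_cls_f. Qed.

Lemma ex_f (R : rel X) (RY : rel Y) (HR : forall a b, R (f a) (f b) = RY a b) a b :
  [exists x in cls sX (f a), exists y in cls sX (f b), R x y] =
  [exists x in cls sY a, exists y in cls sY b, RY x y].
Proof.
apply/idP/idP.
  case/existsP => x /andP [hx /existsP [y /andP [hy hxy]]].
  have [x' ex] := Hcl hx; have [y' ey] := Hcl hy; subst x y.
  apply/existsP; exists x'; rewrite -mem_cls_f hx /=.
  by apply/existsP; exists y'; rewrite -mem_cls_f hy -HR.
case/existsP => x /andP [hx /existsP [y /andP [hy hxy]]].
apply/existsP; exists (f x); rewrite mem_cls_f hx /=.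
by apply/existsP; exists (f y); rewrite mem_cls_f hy HR.
Qed.

Lemma hsq_f a b : hsq sX (f a) (f b) = hsq sY a b.
Proof. by rewrite /hsq cls_f_eq (ex_f HS). Qed.

Lemma hprec_f a b : hprec pX sX (f a) (f b) = hprec pY sY a b.
Proof. by rewrite /hprec cls_f_eq (ex_f HP). Qed.

Lemma hsq_cov_f a b : hsq_cov sX (f a) (f b) -> hsq_cov sY a b.
Proof.
move=> /andP [h1 /existsPn h2]; rewrite /hsq_cov -hsq_f h1 /=.
apply/existsPn => c; move: (h2 (f c)); by rewrite !hsq_f.
Qed.

Hypothesis HlY : lsos_comtrace sim ser pY sY lamY.

Lemma LC3_f a (A B : {set X}) : A != set0 -> B != set0 -> A \subset cls sX (f a) ->
  B \subset cls sX (f a) -> A :|: B = cls sX (f a) ->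
  exists2 x, x \in A & exists2 y, y \in B & ~~ ser (lamX x) (lamX y).
Proof.
move=> hA hB sA sB U.
pose A' := f @^-1: A; pose B' := f @^-1: B.
have nA : A' != set0.
  case/set0Pn: hA => x xA; have [y ey] := Hcl (subsetP sA x xA); subst x.
  by apply/set0Pn; exists y; rewrite inE.
have nB : B' != set0.
  case/set0Pn: hB => x xA; have [y ey] := Hcl (subsetP sB x xA); subst x.
  by apply/set0Pn; exists y; rewrite inE.
have sA' : A' \subset cls sY a.
  by apply/subsetP => y; rewrite inE => /(subsetP sA); rewrite mem_cls_f.
have sB' : B' \subset cls sY a.
  by apply/subsetP => y; rewrite inE => /(subsetP sB); rewrite mem_cls_f.
have U' : A' :|: B' = cls sY a.
  apply/setP => y; rewrite -mem_cls_f -U.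
  by rewrite in_setU !inE.
case: (pickP (fun b => b != a)) => [b hb | hall].
  have := (proj2 HlY) a b; rewrite eq_sym => /(_ hb) [_ _ H3 _ _].
  have [x xA [y yB hxy]] := H3 A' B' nA nB sA' sB' U'.
  exists (f x); first by rewrite inE in xA.
  exists (f y); first by rewrite inE in yB.
  by rewrite !Hlam.
have allA : forall y, y = a by move=> y; move: (hall y) => /= /negbFE /eqP.
case/set0Pn: nA => x; rewrite inE (allA x) => xA.
case/set0Pn: nB => y; rewrite inE (allA y) => yB.
exists (f a) => //; exists (f a) => //.
case: Halph => Hss Hirr _; rewrite Hlam.
by apply/negP => /Hss; rewrite Hirr.
Qed.

Lemma lsos_pair_f a b : a != b ->
    [/\ (hsq_cov sX (f a) (f b) && hprec pX sX (f a) (f b) ->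
           exists2 x, x \in cls sX (f a) & exists2 y, y \in cls sX (f b) & ~~ ser (lamX x) (lamX y)),
        (hsq_cov sX (f a) (f b) && ~~ hprec pX sX (f a) (f b) ->
           exists2 x, x \in cls sX (f a) & exists2 y, y \in cls sX (f b) & ~~ ser (lamX y) (lamX x)),
        (forall A B : {set X}, A != set0 -> B != set0 -> A \subset cls sX (f a) ->
           B \subset cls sX (f a) -> A :|: B = cls sX (f a) ->
           exists2 x, x \in A & exists2 y, y \in B & ~~ ser (lamX x) (lamX y)),
        (~~ ser (lamX (f a)) (lamX (f b)) -> pX (f a) (f b) \/ sX (f b) (f a)) &
        (~~ sim (lamX (f a)) (lamX (f b)) -> pX (f a) (f b) \/ pX (f b) (f a))].
Proof.
move=> nab; have [H1 H2 H3 H4 H5] := (proj2 HlY) a b nab.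
split.
- move=> /andP [/hsq_cov_f c]; rewrite hprec_f => p.
  have [x hx [y hy hxy]] := H1 (introT andP (conj c p)).
  exists (f x); first by rewrite mem_cls_f.
  by exists (f y); rewrite ?mem_cls_f ?Hlam.
- move=> /andP [/hsq_cov_f c]; rewrite hprec_f => p.
  have [x hx [y hy hxy]] := H2 (introT andP (conj c p)).
  exists (f x); first by rewrite mem_cls_f.
  by exists (f y); rewrite ?mem_cls_f ?Hlam.
- exact: LC3_f.
- by rewrite !Hlam HP HS.
- by rewrite !Hlam !HP.
Qed.
End Embed.

Section SO2.
Variables (X : finType) (prec sq : rel X).
Hypothesis Hso : so_structure prec sq.
Lemma sq_step a c b : sq a c -> c = b \/ sq c b -> a = b \/ sq a b.
Proof.
case: Hso => S1 S2 S3 S4 ac [<-|cb]; first by right.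
case: (eqVneq a b) => [->|nab]; [by left | right; exact: S3 ac cb nab].
Qed.
Lemma prec_ext a c d b : (a = c \/ sq a c) -> prec c d -> (d = b \/ sq d b) -> prec a b.
Proof.
case: Hso => S1 S2 S3 S4 h1 cd h2.
have ad : prec a d by case: h1 => [->//|ac]; apply: (S4 a c d); rewrite ac cd.
by case: h2 => [<-//|db]; apply: (S4 a d b); rewrite ad db orbT.
Qed.
Lemma prec_sq_false a b : prec a b -> (b = a \/ sq b a) -> False.
Proof.
case: Hso => S1 S2 S3 S4 ab [e|ba].
  by subst; move: (S1 a); rewrite (S2 _ _ ab).
have : prec a a by apply: (S4 a b a); rewrite ab ba orbT.
by move/S2; rewrite (negbTE (S1 a)).
Qed.
End SO2.

Section Comp.
Variables (E : finType) (sim ser : rel E).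
Hypothesis Halph : comtrace_alphabet sim ser.
Variables (X1 : finType) (prec1 sq1 : rel X1) (lam1 : X1 -> E)
    (X2 : finType) (prec2 sq2 : rel X2) (lam2 : X2 -> E).
Hypotheses (Hso1 : so_structure prec1 sq1) (Hso2 : so_structure prec2 sq2).

Local Notation P12 := (prec12 ser prec1 prec2 lam1 lam2).
Local Notation S12 := (sq12 ser sq1 sq2 lam1 lam2).
Local Notation ST := (star12 ser prec1 sq1 prec2 sq2 lam1 lam2).
Local Notation CP := (comp_prec ser prec1 sq1 prec2 sq2 lam1 lam2).
Local Notation CS := (comp_sq ser prec1 sq1 prec2 sq2 lam1 lam2).
Local Notation lam := (comp_lab lam1 lam2).

Definition Rstar (x y : X1 + X2) : Prop :=
  match x, y with
  | inl a, inl b => a = b \/ sq1 a b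
  | inr a, inr b => a = b \/ sq2 a b
  | inr _, inl _ => False
  | inl a, inr b => exists a', exists b', [/\ (a = a' \/ sq1 a a'),
       (~~ ser (lam1 a') (lam2 b') || ~~ ser (lam2 b') (lam1 a')) & (b' = b \/ sq2 b' b)]
  end.

Lemma P2S1 a b : prec1 a b || sq1 a b -> sq1 a b.
Proof. by case: Hso1 => _ S2 _ _ /orP [/S2|]. Qed.
Lemma P2S2 a b : prec2 a b || sq2 a b -> sq2 a b.
Proof. by case: Hso2 => _ S2 _ _ /orP [/S2|]. Qed.

Lemma Rstar_step x z y : P12 x z || S12 x z -> Rstar z y -> Rstar x y.
Proof.
case: x => a; case: z => c; case: y => b //=.
- by move/P2S1 => h; apply: (sq_step Hso1).
- move/P2S1 => h [a' [b' [h1 h2 h3]]]; exists a', b'; split => //.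
  exact: (sq_step Hso1) h h1.
- by move=> h h3; exists a, c; split => //; left.
- by move/P2S2 => h; apply: (sq_step Hso2).
Qed.

Lemma star_R x y : ST x y -> Rstar x y.
Proof.
case/connectP => p; elim: p x => [|z p IH] x /=.
  by move=> _ ->; case: x => a; left.
by case/andP => exz pz ey; apply: Rstar_step exz (IH z pz ey).
Qed.

Lemma R_star x y : Rstar x y -> ST x y.
Proof.
have e1 : forall a b, sq1 a b -> ST (inl a) (inl b).
  by move=> a b h; apply: connect1; rewrite /= h orbT.
have e2 : forall a b, sq2 a b -> ST (inr a) (inr b).
  by move=> a b h; apply: connect1; rewrite /= h orbT.
case: x => a; case: y => b //=.
- by case=> [->|h]; [exact: connect0 | exact: e1].
- case=> a' [b' [h1 h2 h3]].
  apply: (@connect_trans _ _ (inl a')).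
    by case: h1 => [->|h]; [exact: connect0 | exact: e1].
  apply: (@connect_trans _ _ (inr b')); first exact: connect1.
  by case: h3 => [->|h]; [exact: connect0 | exact: e2].
- by case=> [->|h]; [exact: connect0 | exact: e2].
Qed.

Lemma CS_ll a b : CS (inl a) (inl b) = sq1 a b.
Proof.
rewrite /comp_sq; apply/idP/idP.
  case/andP => /star_R [e|//] ne; by subst; rewrite eqxx in ne.
move=> h; rewrite R_star /=; last by right.
apply/eqP => -[e]; subst; case: Hso1 => S1 _ _ _; by rewrite (negbTE (S1 b)) in h.
Qed.
Lemma CS_rr a b : CS (inr a) (inr b) = sq2 a b.
Proof.
rewrite /comp_sq; apply/idP/idP.
  case/andP => /star_R [e|//] ne; by subst; rewrite eqxx in ne.
move=> h; rewrite R_star /=; last by right.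
apply/eqP => -[e]; subst; case: Hso2 => S1 _ _ _; by rewrite (negbTE (S1 b)) in h.
Qed.
Lemma CS_rl a b : CS (inr a) (inl b) = false.
Proof. by apply/negP => /andP [/star_R]. Qed.

Lemma CP_edge x y : P12 x y -> CP x y.
Proof.
move=> h; apply/existsP; exists x; apply/existsP; exists y.
by rewrite /star12 h !connect0.
Qed.

Lemma CP_ll a b : CP (inl a) (inl b) = prec1 a b.
Proof.
apply/idP/idP; last by move=> h; apply: CP_edge.
case/existsP => z /existsP [w /and3P [/star_R h1 h2 /star_R h3]].
move: h1 h2 h3; case: z => z; case: w => w //=.
move=> h1 h2 h3; apply: (prec_ext Hso1 h1 h2 h3).
Qed.
Lemma CP_rr a b : CP (inr a) (inr b) = prec2 a b.
Proof.
apply/idP/idP; last by move=> h; apply: CP_edge.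
case/existsP => z /existsP [w /and3P [/star_R h1 h2 /star_R h3]].
move: h1 h2 h3; case: z => z; case: w => w //=.
move=> h1 h2 h3; apply: (prec_ext Hso2 h1 h2 h3).
Qed.

Lemma acyc z w : P12 z w -> ST w z -> False.
Proof.
move=> h /star_R; case: z h => z; case: w => w //=.
- move=> h1 h2; exact (prec_sq_false Hso1 h1 h2).
- move=> h1 h2; exact (prec_sq_false Hso2 h1 h2).
Qed.

Lemma CS_star x y : CS x y -> ST x y.
Proof. by case/andP. Qed.

Lemma so_comp : so_structure CP CS.
Proof.
split.
- by move=> a; rewrite /comp_sq eqxx andbF.
- move=> a b /existsP [z /existsP [w /and3P [h1 h2 h3]]].
  rewrite /comp_sq; apply/andP; split.
    apply: connect_trans h1 (connect_trans _ h3); apply: connect1; by rewrite /= h2.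
  apply/eqP => eab; subst; apply: (acyc h2); exact: connect_trans h3 h1.
- move=> a b c /CS_star h1 /CS_star h2 ac; by rewrite /comp_sq ac andbT; exact: connect_trans h1 h2.
- move=> a b c /orP [] /andP [h1 h2].
  + case/existsP: h2 => z /existsP [w /and3P [k1 k2 k3]].
    apply/existsP; exists z; apply/existsP; exists w.
    by rewrite k2 k3 !andbT /star12; exact: connect_trans (CS_star h1) k1.
  + case/existsP: h1 => z /existsP [w /and3P [k1 k2 k3]].
    apply/existsP; exists z; apply/existsP; exists w.
    by rewrite k1 k2 /star12; exact: connect_trans k3 (CS_star h2).
Qed.

Local Notation C := (cls CS).

Lemma cls_l_inr a b : (inr b \in C (inl a)) = false.
Proof. by apply/negbTE; rewrite inE /sq_eqv /= CS_rl andbF. Qed.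
Lemma cls_r_inl a b : (inl b \in C (inr a)) = false.
Proof. by apply/negbTE; rewrite inE /sq_eqv /= CS_rl. Qed.

Lemma Hcl_l a x : x \in C (inl a) -> exists y, x = inl y.
Proof. by case: x => y; [exists y | rewrite cls_l_inr]. Qed.
Lemma Hcl_r a x : x \in C (inr a) -> exists y, x = inr y.
Proof. by case: x => y; [rewrite cls_r_inl | exists y]. Qed.

Lemma mid' al be u v m : hsq_cov CS al be -> u \in C al -> v \in C be ->
  ST u m -> ST m v -> (m \in C al) || (m \in C be).
Proof.
move=> hc hu hv h1 h2; apply: (mid so_comp hc hu hv).
  by rewrite /comp_sq h1; case: (u == m).
by rewrite /comp_sq h2; case: (m == v).
Qed.

Lemma P_star x y : P12 x y -> ST x y.
Proof. by move=> h; apply: connect1; rewrite /= h. Qed.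
Lemma S_star x y : S12 x y -> ST x y.
Proof. by move=> h; apply: connect1; rewrite /= h orbT. Qed.
Lemma ST_trans x y z : ST x y -> ST y z -> ST x z.
Proof. exact: connect_trans. Qed.
Lemma ST_refl x : ST x x.
Proof. exact: connect0. Qed.

Lemma cross_LC2 a b : hsq_cov CS (inl a) (inr b) && ~~ hprec CP CS (inl a) (inr b) ->
  exists2 x, x \in C (inl a) & exists2 y, y \in C (inr b) & ~~ ser (lam y) (lam x).
Proof.
move=> /andP [hc hnp].
have hc' := hc; case/andP: hc' => /andP [hne /existsP [u /andP [hu /existsP [v /andP [hv huv]]]]] _.
have [x ex] := Hcl_l hu; have [y ey] := Hcl_r hv; subst u v.
move: huv => /CS_star /star_R /= [x' [y' [k1 k2 k3]]].
have hx' : inl x' \in C (inl a).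
  have := mid' (m := inl x') hc hu hv.
  rewrite cls_r_inl orbF; apply; apply: R_star => //=.
  by exists x', y'; split => //; left.
have hy' : inr y' \in C (inr b).
  have := mid' (m := inr y') hc hu hv.
  rewrite cls_l_inr /=; apply; apply: R_star => //=.
  by exists x', y'; split => //; left.
case/orP: k2 => k2.
  exfalso; move/negP: hnp; apply; rewrite /hprec hne /=.
  apply/existsP; exists (inl x'); rewrite hx' /=; apply/existsP; exists (inr y').
  by rewrite hy' /=; apply: CP_edge.
by exists (inl x') => //; exists (inr y').
Qed.

Lemma cross_LC1 a b : hsq_cov CS (inl a) (inr b) && hprec CP CS (inl a) (inr b) ->
  exists2 x, x \in C (inl a) & exists2 y, y \in C (inr b) & ~~ ser (lam x) (lam y).
Proof.
move=> /andP [hc hp].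
case/andP: hp => _ /existsP [u /andP [hu /existsP [v /andP [hv huv]]]].
have [x ex] := Hcl_l hu; have [y ey] := Hcl_r hv; subst u v.
case/existsP: huv => z /existsP [w /and3P [h1 h2 h3]].
move: h1 h2 h3; case: z => z; case: w => w h1 h2 h3.
- have := mid' (m := inl w) hc hu hv (ST_trans h1 (P_star h2)) h3.
  rewrite cls_r_inl orbF => hw; exfalso.
  have hP : CP (inl x) (inl w).
    by apply/existsP; exists (inl z); apply/existsP; exists (inl w); rewrite h1 h2 ST_refl.
  exact: (prec_not_same so_comp hP hu hw).
- have := mid' (m := inl z) hc hu hv h1 (ST_trans (P_star h2) h3).
  rewrite cls_r_inl orbF => hz.
  have := mid' (m := inr w) hc hu hv (ST_trans h1 (P_star h2)) h3.
  rewrite cls_l_inr /= => hw.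
  by exists (inl z) => //; exists (inr w).
- by [].
- have := mid' (m := inr z) hc hu hv h1 (ST_trans (P_star h2) h3).
  rewrite cls_l_inr /= => hz; exfalso.
  have hP : CP (inr z) (inr y).
    by apply/existsP; exists (inr z); apply/existsP; exists (inr w); rewrite h3 h2 ST_refl.
  exact: (prec_not_same so_comp hP hz hv).
Qed.

Lemma cross_rl_cov a b : hsq_cov CS (inr a) (inl b) = false.
Proof.
apply/negbTE; rewrite /hsq_cov /hsq; apply/negP => /andP [/andP [_ /existsP [u /andP [hu /existsP [v /andP [hv huv]]]]] _].
have [x ex] := Hcl_r hu; have [y ey] := Hcl_l hv; subst u v.
by rewrite CS_rl in huv.
Qed.

End Comp.

Unset Implicit Arguments.


Theorem mainTheorem13 (E : finType) (sim ser : rel E)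
    (X1 : finType) (prec1 sq1 : rel X1) (lam1 : X1 -> E)
    (X2 : finType) (prec2 sq2 : rel X2) (lam2 : X2 -> E) :
  comtrace_alphabet sim ser ->
  lsos_comtrace sim ser prec1 sq1 lam1 ->
  lsos_comtrace sim ser prec2 sq2 lam2 ->
  lsos_comtrace sim ser
    (comp_prec ser prec1 sq1 prec2 sq2 lam1 lam2)
    (comp_sq ser prec1 sq1 prec2 sq2 lam1 lam2)
    (comp_lab lam1 lam2).
Proof.
move=> Halph HL1 HL2.
have Hso1 := proj1 HL1; have Hso2 := proj1 HL2.
have Hso := so_comp ser lam1 lam2 Hso1 Hso2.
have inl_inj : injective (@inl X1 X2) by move=> x y [].
have inr_inj : injective (@inr X1 X2) by move=> x y [].
have Hl := lsos_pair_f Halph Hso1 Hso inl_inj (CS_ll ser lam1 lam2 Hso1 Hso2)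
   (CP_ll ser lam1 lam2 Hso1 Hso2) (@Hcl_l _ ser _ prec1 sq1 lam1 _ prec2 sq2 lam2 Hso1 Hso2)
   (lamX := comp_lab lam1 lam2) (fun _ => erefl) HL1.
have Hr := lsos_pair_f Halph Hso2 Hso inr_inj (CS_rr ser lam1 lam2 Hso1 Hso2)
   (CP_rr ser lam1 lam2 Hso1 Hso2) (@Hcl_r _ ser _ prec1 sq1 lam1 _ prec2 sq2 lam2 Hso1 Hso2)
   (lamX := comp_lab lam1 lam2) (fun _ => erefl) HL2.
have H3l := LC3_f Halph inl_inj (CS_ll ser lam1 lam2 Hso1 Hso2)
   (@Hcl_l _ ser _ prec1 sq1 lam1 _ prec2 sq2 lam2 Hso1 Hso2)
   (lamX := comp_lab lam1 lam2) (fun _ => erefl) HL1.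
have H3r := LC3_f Halph inr_inj (CS_rr ser lam1 lam2 Hso1 Hso2)
   (@Hcl_r _ ser _ prec1 sq1 lam1 _ prec2 sq2 lam2 Hso1 Hso2)
   (lamX := comp_lab lam1 lam2) (fun _ => erefl) HL2.
split => // x y; case: x => a; case: y => b nxy.
- by apply: Hl; apply: contra nxy => /eqP ->.
- split.
  + by apply: (@cross_LC1 _ ser _ prec1 sq1 lam1 _ prec2 sq2 lam2 Hso1 Hso2).
  + by apply: (@cross_LC2 _ ser _ prec1 sq1 lam1 _ prec2 sq2 lam2 Hso1 Hso2).
  + exact: H3l.
  + by move=> h; left; apply: CP_edge.
  + move=> h; left; apply: CP_edge => /=; apply: contra h; case: Halph => Hss _ _; exact: Hss.
- split.
  + by rewrite (@cross_rl_cov _ ser _ prec1 sq1 lam1 _ prec2 sq2 lam2 Hso1 Hso2).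
  + by rewrite (@cross_rl_cov _ ser _ prec1 sq1 lam1 _ prec2 sq2 lam2 Hso1 Hso2).
  + exact: H3r.
  + by move=> h; right; apply/andP; split; [apply: S_star | ].
  + move=> h; right; apply: CP_edge => /=; apply: contra h => h.
    case: Halph => Hss _ Hsym; rewrite Hsym; exact: Hss.
- by apply: Hr; apply: contra nxy => /eqP ->.
Qed.
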